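(* Let $m\ge 1$ be a fixed integer and $c>\frac{1}{m}$ a fixed constant, and let $T$ be the total population of the $m$-fold Poisson branching process $T^{po}_{m,c}$. Then there exists a positive constant $C=C(m,c)$ such that for every positive integer $K$, $$\Pr(T=K)<e^{-CK}.$$
   Context: An $m$-fold Poisson random variable with parameter $c$ is a random variable $Z$ with $\Pr(Z=k)=e^{-c}\frac{c^{k/m}}{(k/m)!}$ if $m\mid k$ and $\Pr(Z=k)=0$ otherwise ($k\ge 0$); i.e. $m$ times a Poisson$(c)$ variable. The $m$-fold Poisson branching process $T^{po}_{m,c}$ is the Galton–Watson process $Y_0=1$, $Y_t=Y_{t-1}-1+Z_t$ for $t\ge1$, where $Z_1,Z_2,\dots$ are i.i.d. $m$-fold Poisson variables with parameter $c$. Its total population $T$ is the least $t$ with $Y_t=0$ (the total number of nodes created, including the root), with $T=\infty$ if no such $t$ exists. *)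

(* Defs.v *)
From HB Require Import structures.
From mathcomp Require Import all_boot all_order all_algebra.
From mathcomp Require Import all_classical all_reals all_analysis.
Set Implicit Arguments. Unset Strict Implicit. Unset Printing Implicit Defensive.
Import Order.TTheory GRing.Theory Num.Theory.
Local Open Scope ring_scope.
Local Open Scope classical_set_scope.

Definition mpois_pmf (R : realType) (m : nat) (c : R) (k : nat) : R :=
  if (m %| k)%N then expR (- c) * c ^+ (k %/ m) / ((k %/ m)`!)%:R else 0.

(* Y_t = 1 + Z_1 + ... + Z_t - t, for outcomes z with z i = Z_{i+1}. *)
Definition walkY (K : nat) (z : {ffun 'I_K -> nat}) (t : nat) : int :=
  1 + (\sum_(i < K | (i < t)%N) (z i)%:Z) - t%:Z.

(* The event {T = K}: Y_t <> 0 for all t < K, and Y_K = 0 (it depends only on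
   Z_1, ..., Z_K). *)
Definition hitsAt (K : nat) (z : {ffun 'I_K -> nat}) : Prop :=
  (forall t : nat, (t < K)%N -> walkY z t <> 0) /\ walkY z K = 0.

(* Pr(T = K): the (product) law of the i.i.d. vector (Z_1,...,Z_K), summed
   over the (countable) event {T = K}. *)
Definition PrT (R : realType) (m : nat) (c : R) (K : nat) : \bar R :=
  \esum_(z in [set z : {ffun 'I_K -> nat} | hitsAt z])
     (\prod_(i < K) mpois_pmf m c (z i))%:E.

(* Main.v *)
Require Import Defs.
From HB Require Import structures.
From mathcomp Require Import all_boot all_order all_algebra.
From mathcomp Require Import all_classical all_reals all_analysis.
From mathcomp Require Import ring lra zify.
Import Order.TTheory GRing.Theory Num.Theory.
Local Open Scope ring_scope.
Set Warnings "-all".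

Lemma exp_partial (R : realType) (x : R) n : 0 <= x ->
  \sum_(0 <= j < n) x ^+ j / j`!%:R <= expR x.
Proof.
move=> x0; rewrite /expR.
have := @nondecreasing_cvgn_le R (series (exp_coeff x)) _ (is_cvg_series_exp_coeff x) n.
apply.
apply: nondecreasing_series => k _ _; rewrite /exp_coeff /=.
by rewrite divr_ge0 // exprn_ge0.
Qed.

Lemma div_sum (R : realType) (g : nat -> R) m n : (0 < m)%N -> (forall j, 0 <= g j) ->
  \sum_(0 <= k < n) (if (m %| k)%N then g (k %/ m)%N else 0) <= \sum_(0 <= j < n) g j.
Proof.
move=> m0 g0.
have ge0 : forall k, 0 <= (if (m %| k)%N then g (k %/ m)%N else 0).
  by move=> k; case: ifP.
apply: (@le_trans _ _ (\sum_(0 <= k < n * m) (if (m %| k)%N then g (k %/ m)%N else 0))).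
  rewrite [leRHS](@big_cat_nat _ _ _ n) //=; last exact: leq_pmulr.
  by rewrite lerDl sumr_ge0.
rewrite big_nat_mul; apply: ler_sum_nat => j _.
rewrite big_ltn; last by rewrite ltn_mul2r m0 ltnSn.
rewrite dvdn_mull // mulnK // big_nat_cond big1 /=; first by rewrite addr0.
move=> k /andP[/andP[h1 h2] _].
case: ifP => // /dvdnP [q Hq]; exfalso; move: h1 h2; rewrite Hq ltn_mul2r ltn_mul2r m0 /=.
move=> h1 h2; have := leq_ltn_trans h1 h2; by rewrite ltnS leqNgt ltnSn.
Qed.

Lemma hsum_le (R : realType) (m : nat) (c s : R) n : (0 < m)%N -> 0 <= c -> 0 <= s ->
  \sum_(0 <= k < n) s ^+ k * mpois_pmf m c k <= expR (c * (s ^+ m - 1)).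
Proof.
move=> m0 c0 s0.
have E : forall k, s ^+ k * mpois_pmf m c k =
   expR (- c) * (if (m %| k)%N then (c * s ^+ m) ^+ (k %/ m)%N / (k %/ m)`!%:R else 0).
  move=> k; rewrite /mpois_pmf; case: ifP => [/divnK Hk|_]; last by rewrite !mulr0.
  rewrite -{1}Hk mulnC exprM exprMn.
  by ring.
rewrite (eq_bigr _ (fun k _ => E k)) -mulr_sumr.
rewrite mulrDr mulrN1 addrC expRD.
rewrite ler_wpM2l ?expR_ge0 //.
apply: (le_trans (@div_sum R (fun j => (c * s ^+ m) ^+ j / j`!%:R) m n m0 _)).
  move=> j.
  by rewrite divr_ge0 // exprn_ge0 // mulr_ge0 // exprn_ge0.
exact: exp_partial (mulr_ge0 c0 (exprn_ge0 _ s0)).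
Qed.

Lemma bern (R : realType) (e : R) n : 0 <= e <= 1 -> (1 - e) ^+ n * (1 + n%:R * e) <= 1.
Proof.
move=> /andP[e0 e1]; elim: n => [|n IH]; first by rewrite expr0 mul0r addr0 mulr1.
rewrite exprS -mulrA -addn1 natrD.
set p := (1 - e) ^+ n.
have p0 : 0 <= p by rewrite exprn_ge0 // subr_ge0.
have n0 : 0 <= n%:R :> R by [].
have h : 0 <= p * (e * e) * (n%:R + 1) by rewrite !mulr_ge0 // addr_ge0.
have -> : (1 - e) * (p * (1 + (n%:R + 1%:R) * e)) = p * (1 + n%:R * e) - p * (e * e) * (n%:R + 1) by ring.
rewrite /p in h * ; lra.
Qed.

Lemma choose_s (R : realType) (m : nat) (c : R) : (1 <= m)%N -> (m%:R)^-1 < c ->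
  exists s : R, 0 < s < 1 /\ expR (c * (s ^+ m - 1)) < s.
Proof.
move=> hm hc.
set M : R := m%:R.
have M1 : 1 <= M by rewrite /M ler1n.
have M0 : 0 < M by lra.
have cM : 1 < c * M.
  by rewrite -(@ltr_pdivrMr _ M) ?mul1r.
have c0 : 0 < c by nra.
set e := (c * M - 1) / (2 * (c * M + M)).
have D0 : 0 < 2 * (c * M + M) by nra.
have eE : e * (2 * (c * M + M)) = c * M - 1 by rewrite /e divfK // gt_eqF.
have e0 : 0 < e by rewrite /e divr_gt0 // subr_gt0.
have e1 : e < 1 / 2 by nra.
exists (1 - e); split; first by apply/andP; split; lra.
set t := (1 - e) ^+ m.
have tB : t * (1 + M * e) <= 1 by apply: bern; apply/andP; split; lra.
set u := 1 - t.
have uB : M * e <= u * (1 + M * e) by rewrite /u; nra.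
have key1 : 1 + M * e < (1 - e) * (1 + M * e + c * M * e) by nra.
have cuB : c * M * e <= c * u * (1 + M * e) by have := ler_wpM2l (ltW c0) uB; rewrite !mulrA.
have key2 : (1 - e) * (1 + M * e + c * M * e) <= (1 - e) * (1 + M * e + c * u * (1 + M * e)).
  by rewrite ler_wpM2l ?lerD2l //; lra.
have key3 : (1 - e) * (1 + M * e + c * u * (1 + M * e)) = ((1 - e) * (1 + c * u)) * (1 + M * e) by ring.
have key : 1 < (1 - e) * (1 + c * u).
  have Me0 : 0 < 1 + M * e by nra.
  by rewrite -(@ltr_pM2r _ (1 + M * e)) // mul1r -key3; lra.
have ex : 1 + c * u <= expR (c * u) := expR_ge1Dx _.
have -> : c * (t - 1) = - (c * u) by rewrite /u; ring.
rewrite expRN.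
have Ep : 0 < expR (c * u) := expR_gt0 _.
rewrite -[X in X < _]div1r ltr_pdivrMr //.
nra.
Qed.

Lemma pmf_ge0 (R : realType) m (c : R) k : 0 <= c -> 0 <= mpois_pmf m c k.
Proof.
move=> c0; rewrite /mpois_pmf; case: ifP => // _.
by rewrite !mulr_ge0 ?expR_ge0 ?exprn_ge0 ?invr_ge0.
Qed.

Lemma PrT_le (R : realType) m (c s : R) K' : (0 < m)%N -> 0 <= c -> 0 < s ->
  (PrT m c K'.+1 <= ((s ^+ K')^-1 * expR (c * (s ^+ m - 1)) ^+ K'.+1)%:E)%E.
Proof.
move=> m0 c0 s0.
set h := fun k : nat => s ^+ k * mpois_pmf m c k.
have h0 : forall k, 0 <= h k by move=> k; rewrite /h; apply: mulr_ge0; [exact: exprn_ge0 (ltW s0) | exact: pmf_ge0].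
set G := fun z : {ffun 'I_K'.+1 -> nat} => (s ^+ K')^-1 * \prod_(i < K'.+1) h (z i).
have G0 : forall z, 0 <= G z.
  move=> z; rewrite /G; apply: mulr_ge0; first by rewrite invr_ge0 exprn_ge0 // ltW.
  by apply: prodr_ge0 => i _.
set emb := fun w : {ffun 'I_K'.+1 -> 'I_K'.+1} => [ffun i => nat_of_ord (w i)].
have emb_inj : injective emb.
  move=> w1 w2 H; apply/ffunP => i; apply/val_inj.
  by have := congr1 (fun f : {ffun 'I_K'.+1 -> nat} => f i) H; rewrite /emb /= !ffunE.
set t := [seq emb w | w <- enum {ffun 'I_K'.+1 -> 'I_K'.+1}].
have ut : uniq t by rewrite map_inj_uniq // enum_uniq.
rewrite /PrT /esum; apply: ub_ereal_sup => _ [A [finA sA] <-].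
have Hsum : forall z, hitsAt z -> (\sum_(i < K'.+1) z i)%N = K'.
  move=> z [_ HK]; move: HK; rewrite /walkY.
  rewrite (eq_bigl xpredT); last by move=> i; rewrite ltn_ord.
  rewrite -(big_morph Posz PoszD (erefl (Posz 0))).
  set S := (\sum_(_ <- _ | _) _)%N => H.
  have HS : (\sum_(i < K'.+1) z i)%N = S by apply: eq_bigl.
  lia.
apply: (@le_trans _ _ (\sum_(z \in A) (G z)%:E)%E).
  apply: lee_fsum => // z Az; rewrite lee_fin le_eqVlt; apply/orP; left; apply/eqP.
  rewrite /G /h big_split /= prodrXr (Hsum z (sA z Az)) mulrA mulVf ?mul1r //.
  by rewrite expf_neq0 // gt_eqF.
apply: (@le_trans _ _ (\sum_(z \in [set` t]) (G z)%:E)%E).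
  apply: lee_fsum_nneg_subset => //.
  - exact: finite_seq.
  - move=> z /set_mem Az; apply/mem_set => /=.
    have zlt : forall i, (z i < K'.+1)%N.
      move=> i; have := Hsum z (sA z Az); rewrite (bigD1 i) //= => E; lia.
    apply/mapP; exists [ffun i => inord (z i)]; first by rewrite mem_enum.
    by apply/ffunP => i; rewrite /emb !ffunE inordK.
  - by move=> z _; rewrite lee_fin.
rewrite fsumEFin; last exact: finite_seq.
rewrite -fsbig_seq // big_map big_enum /= lee_fin.
rewrite -mulr_sumr; apply: ler_wpM2l; first by rewrite invr_ge0 exprn_ge0 // ltW.
have -> : \sum_(w in {ffun 'I_K'.+1 -> 'I_K'.+1}) \prod_(i < K'.+1) h (emb w i)
    = \sum_(w : {ffun 'I_K'.+1 -> 'I_K'.+1}) \prod_(i < K'.+1) (fun (_ : 'I_K'.+1) (j : 'I_K'.+1) => h j) i (w i).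
  by apply: eq_bigr => w _; apply: eq_bigr => i _; rewrite /emb ffunE.
rewrite -(bigA_distr_bigA (fun (_ : 'I_K'.+1) (j : 'I_K'.+1) => h j)) /=.
apply: (@le_trans _ _ (\prod_(i < K'.+1) expR (c * (s ^+ m - 1)))); last by rewrite prodr_const card_ord.
apply: ler_prod => i _; rewrite sumr_ge0 //=.
rewrite -(big_mkord xpredT h).
rewrite /h; exact: hsum_le m0 c0 (ltW s0).
Qed.

Theorem lemma3 (R : realType) (m : nat) (c : R) (hm : (1 <= m)%N)
    (hc : (m%:R)^-1 < c) :
  exists C : R, 0 < C /\
    forall K : nat, (0 < K)%N -> (PrT m c K < (expR (- (C * K%:R)))%:E)%E.
Proof.
have [s [/andP[s0 s1] ha]] := @choose_s R m c hm hc.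
have c0 : 0 <= c.
  apply: ltW; apply: le_lt_trans hc; rewrite invr_ge0; exact: ler0n.
set a := expR (c * (s ^+ m - 1)) in ha *.
have a0 : 0 < a := expR_gt0 _.
set q := a / s.
have q0 : 0 < q by rewrite divr_gt0.
have q1 : q < 1 by rewrite /q ltr_pdivrMr // mul1r.
exists (- ln q); split; first by rewrite oppr_gt0 ln_lt0 // q0 q1.
move=> [|K'] // _.
apply: (le_lt_trans (@PrT_le R m c s K' hm c0 s0)).
rewrite -/a.
rewrite lte_fin.
have -> : expR (- (- ln q * K'.+1%:R)) = q ^+ K'.+1.
  by rewrite mulNr opprK expRM_natr lnK // posrE.
have -> : (s ^+ K')^-1 * a ^+ K'.+1 = s * q ^+ K'.+1.
  rewrite /q expr_div_n [s ^+ K'.+1]exprS; field.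
  by rewrite expf_neq0 // gt_eqF.
have qK : 0 < q ^+ K'.+1 := exprn_gt0 _ q0.
nra.
Qed.
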